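(* As formal power series in $z$ with integer coefficients, $$\Psi^2(z)=\frac{1}{1+z}\sum_{s\ge0}\ \sum_{k_1>k_2>\dots>k_s\ge0}3^s\prod_{j=1}^{s}\frac{z^{3^{k_j}}\bigl(1+z^{3^{k_j}}\bigr)}{1+z^{3^{k_j+1}}},$$ where the term for $s=0$ is interpreted as $1$. In particular $\Psi^2(z)\equiv \frac{1}{1+z}$ modulo $3$ (coefficientwise).
   Context: $\Psi(z)=\prod_{j\ge0}\bigl(1+z^{3^j}\bigr)=\sum_{k\ge0}\sum_{n_1>\dots>n_k\ge0}z^{3^{n_1}+\dots+3^{n_k}}$, a formal power series with coefficients in $\{0,1\}$. Rational functions such as $1/(1+z)$ are expanded as power series in $z$. For integral power series $f,g$, ''$f=g$ modulo $3^e$'' means all coefficients of $f-g$ are divisible by $3^e$. *)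

(* Defs.v *)
(* Formal power series with integer coefficients are
   represented by their coefficient functions nat -> int. *)
From HB Require Import structures.
From mathcomp Require Import all_boot all_order all_algebra.
Set Implicit Arguments. Unset Strict Implicit. Unset Printing Implicit Defensive.
Import Order.TTheory GRing.Theory Num.Theory.
Local Open Scope ring_scope.

Definition series := nat -> int.

Definition smul (f g : series) : series :=
  fun n => \sum_(i < n.+1) f i * g (n - i)%N.

Definition sone : series := fun n => (n == 0)%:R.

Definition sXn (m : nat) : series := fun n => (n == m)%:R.

Definition s1pXn (m : nat) : series := fun n => (n == 0)%:R + (n == m)%:R.

(* expansion of 1/(1+z^m) as a power series (m > 0):
   sum_{j>=0} (-1)^j z^(m j) *)
Definition sinv1pXn (m : nat) : series :=
  fun n => if (m %| n)%N then (-1) ^+ (n %/ m) else 0.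

(* Psi(z) = sum_{k>=0} sum_{n_1>...>n_k>=0} z^(3^n_1+...+3^n_k):
   coefficient of z^n counts finite sets S of exponents with sum_{j in S} 3^j = n.
   Such S necessarily satisfy S ⊆ {0..n} (as 3^j > n for j > n), so the
   count is taken over subsets of 'I_n.+1. *)
Definition Psi : series :=
  fun n => \sum_(S : {set 'I_n.+1}) ((\sum_(j in S) 3 ^ (val j))%N == n)%:R.

Definition Tk (k : nat) : series :=
  smul (smul (sXn (3 ^ k)) (s1pXn (3 ^ k))) (sinv1pXn (3 ^ k.+1)).

Definition prodT (N : nat) (K : {set 'I_N}) : series :=
  \big[smul/sone]_(k in K) Tk (val k).

(* sum_{s>=0} sum_{k_1>...>k_s>=0} 3^s prod_j T_{k_j}, i.e. the sum over all
   finite sets K of naturals of 3^|K| prod_{k in K} T_k.  The family is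
   summable: T_k has order 3^k, so for coefficient n only K ⊆ {0..n}
   contribute (3^k > n for k > n); the coefficient is therefore the finite
   sum over K : {set 'I_n.+1}. *)
Definition bigSum : series :=
  fun n => \sum_(K : {set 'I_n.+1}) (3%:Z ^+ #|K|) * prodT K n.

(* Main.v *)
Require Import Defs.
From HB Require Import structures.
From mathcomp Require Import all_boot all_order all_algebra.
From mathcomp Require Import boolp.
From mathcomp Require Import ring zify.
Import Order.TTheory GRing.Theory Num.Theory.
Local Open Scope ring_scope.

HB.instance Definition _ := Choice.copy series (nat -> int).

Definition sadd (f g : series) : series := fun n => f n + g n.
Definition sopp (f : series) : series := fun n => - f n.
Definition szero : series := fun n => 0.

Lemma saddA : associative sadd.
Proof. by move=> f g h; apply: funext => n; rewrite /sadd addrA. Qed.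
Lemma saddC : commutative sadd.
Proof. by move=> f g; apply: funext => n; rewrite /sadd addrC. Qed.
Lemma sadd0 : left_id szero sadd.
Proof. by move=> f; apply: funext => n; rewrite /sadd add0r. Qed.
Lemma saddN : left_inverse szero sopp sadd.
Proof. by move=> f; apply: funext => n; rewrite /sadd /sopp addNr. Qed.

HB.instance Definition _ := GRing.isZmodule.Build series saddA saddC sadd0 saddN.

Definition tp (f : series) (n : nat) : {poly int} := \poly_(i < n.+1) f i.
Lemma tpE f n j : (j <= n)%N -> (tp f n)`_j = f j.
Proof. by rewrite coef_poly ltnS => ->. Qed.

Lemma smul_poly f g (p q : {poly int}) n :
  (forall j, (j <= n)%N -> p`_j = f j) -> (forall j, (j <= n)%N -> q`_j = g j) ->
  smul f g n = (p * q)`_n.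
Proof.
move=> Hp Hq; rewrite /smul coefM; apply: eq_bigr => i _.
by rewrite Hp ?Hq ?leq_subr // -ltnS ltn_ord.
Qed.

Arguments smul_poly {f g p q n}.
Lemma smulA : associative smul.
Proof.
move=> f g h; apply: funext => n.
have Ef j : (j <= n)%N -> (tp f n)`_j = f j by move=> jn; rewrite tpE.
have Eg j : (j <= n)%N -> (tp g n)`_j = g j by move=> jn; rewrite tpE.
have Eh j : (j <= n)%N -> (tp h n)`_j = h j by move=> jn; rewrite tpE.
have Efg j : (j <= n)%N -> (tp f n * tp g n)`_j = smul f g j.
  move=> jn; apply/esym/smul_poly => k kn; [apply: Ef|apply: Eg]; exact: leq_trans jn.
have Egh j : (j <= n)%N -> (tp g n * tp h n)`_j = smul g h j.
  move=> jn; apply/esym/smul_poly => k kn; [apply: Eg|apply: Eh]; exact: leq_trans jn.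
rewrite (smul_poly Efg Eh) (smul_poly Ef Egh) mulrA //.
Qed.

Lemma smulC : commutative smul.
Proof.
move=> f g; apply: funext => n.
have Ef j : (j <= n)%N -> (tp f n)`_j = f j by move=> jn; rewrite tpE.
have Eg j : (j <= n)%N -> (tp g n)`_j = g j by move=> jn; rewrite tpE.
by rewrite (smul_poly Ef Eg) (smul_poly Eg Ef) mulrC.
Qed.

Lemma smul1 : left_id sone smul.
Proof.
move=> f; apply: funext => n.
have Ef j : (j <= n)%N -> (tp f n)`_j = f j by move=> jn; rewrite tpE.
have E1 j : (j <= n)%N -> (1 : {poly int})`_j = sone j by move=> _; rewrite coef1.
by rewrite (smul_poly E1 Ef) mul1r Ef.
Qed.

Lemma smulD : left_distributive smul sadd.
Proof.
move=> f g h; apply: funext => n.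
have Ef j : (j <= n)%N -> (tp f n)`_j = f j by move=> jn; rewrite tpE.
have Eg j : (j <= n)%N -> (tp g n)`_j = g j by move=> jn; rewrite tpE.
have Eh j : (j <= n)%N -> (tp h n)`_j = h j by move=> jn; rewrite tpE.
have Efg j : (j <= n)%N -> (tp f n + tp g n)`_j = sadd f g j.
  by move=> jn; rewrite coefD Ef ?Eg.
by rewrite (smul_poly Efg Eh) /sadd (smul_poly Ef Eh) (smul_poly Eg Eh) mulrDl coefD.
Qed.

Lemma sone_neq0 : sone != szero.
Proof. apply/eqP => /(congr1 (fun f => f 0%N)); rewrite /sone /szero /=; by []. Qed.

HB.instance Definition _ := GRing.Zmodule_isComNzRing.Build series smulA smulC smul1 smulD sone_neq0.


Lemma cD (f g : series) n : (f + g) n = f n + g n. Proof. by []. Qed.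
Lemma cN (f : series) n : (- f) n = - f n. Proof. by []. Qed.
Lemma cM (f g : series) n : (f * g) n = \sum_(k < n.+1) f k * g (n - k)%N.
Proof. by []. Qed.
Lemma c1 n : (1 : series) n = (n == 0)%:R. Proof. by []. Qed.
Lemma cMn (f : series) k n : (f *+ k) n = f n *+ k.
Proof. by elim: k => [|k IH]; rewrite ?mulr0n // !mulrS cD IH. Qed.
Lemma cnat (f : series) k n : ((k%:R : series) * f) n = k%:R * f n.
Proof. by rewrite !mulr_natl cMn. Qed.
Lemma csum (I : finType) (P : pred I) (F : I -> series) n :
  (\sum_(i | P i) F i) n = \sum_(i | P i) F i n.
Proof. exact: (big_morph (fun f : series => f n) (fun f g => cD f g n) (erefl _)). Qed.

Lemma shiftE m (f : series) n :
  (sXn m * f) n = if (m <= n)%N then f (n - m)%N else 0.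
Proof.
rewrite cM /sXn; case: leqP => [mn|nm].
  have mn1 : (m < n.+1)%N by rewrite ltnS.
  rewrite (bigD1 (Ordinal mn1)) //= eqxx mul1r big1 ?addr0 // => i ne.
  have -> : (nat_of_ord i == m) = false.
    by apply/negbTE; apply: contra ne => /eqP e; apply/eqP/val_inj.
  by rewrite mul0r.
rewrite big1 // => i _.
have -> : (nat_of_ord i == m) = false by apply: ltn_eqF; exact: leq_trans (ltn_ord i) nm.
by rewrite mul0r.
Qed.

Lemma sXnD : {morph sXn : x y / (x + y)%N >-> x * y}.
Proof.
move=> a b; apply: funext => n; rewrite shiftE /sXn; case: leqP => an.
  by have -> : (n - a == b)%N = (n == a + b)%N by apply/eqP/eqP; lia.
by have -> : (n == a + b)%N = false by apply/eqP; lia.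
Qed.

Lemma sXn0 : sXn 0 = 1. Proof. by []. Qed.
Lemma s1pXnE m : s1pXn m = 1 + sXn m. Proof. by []. Qed.

Lemma inv_cancel m : (0 < m)%N -> (1 + sXn m) * sinv1pXn m = 1.
Proof.
move=> m0; apply: funext => n; rewrite mulrDl mul1r cD shiftE c1 /sinv1pXn.
case: leqP => [mn|nm].
  have -> : n = ((n - m) + m)%N by rewrite subnK.
  rewrite addnK dvdn_addl // (_ : (n - m + m == 0)%N = false); last by apply/eqP; lia.
  case: ifP => // dv; rewrite divnDr // divnn m0 exprD expr1 mulrN1 addNr //.
case: n nm => [|n] nm; first by rewrite dvdn0 div0n expr0 addr0.
have -> : (m %| n.+1)%N = false.
  by apply/negP => /(dvdn_leq (ltn0Sn n)); rewrite leqNgt nm.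
by rewrite addr0.
Qed.

Definition Q N : series := \prod_(j < N) (sXn (3 ^ j) + 1).
Definition R N : series := \prod_(j < N) (3%:R * Tk j + 1).

Lemma stab (G : nat -> series) : (forall j i, (i < 3 ^ j)%N -> G j i = 0) ->
  forall i d, (\prod_(j < i.+1 + d) (G j + 1)) i = (\prod_(j < i.+1) (G j + 1)) i.
Proof.
move=> HG i; elim=> [|d IH]; first by rewrite addn0.
rewrite addnS big_ord_recr /= mulrDr mulr1 cD IH cM big1 ?add0r // => k _.
rewrite HG ?mulr0 //; apply: leq_ltn_trans (leq_subr k i) _.
apply: ltn_trans (ltn_expl _ (isT : (1 < 3)%N)).
by rewrite ltnS leq_addr.
Qed.

Lemma Tk_small j i : (i < 3 ^ j)%N -> Tk j i = 0.
Proof.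
move=> ij; have -> : Tk j = sXn (3 ^ j) * (s1pXn (3 ^ j) * sinv1pXn (3 ^ j.+1)).
  by rewrite mulrA.
by rewrite shiftE leqNgt ij.
Qed.

Lemma Q_stab i d : Q (i.+1 + d) i = Q i.+1 i.
Proof. apply: (@stab (fun j => sXn (3 ^ j))) => j k kj; by rewrite /sXn ltn_eqF. Qed.

Lemma R_stab i d : R (i.+1 + d) i = R i.+1 i.
Proof. apply: (@stab (fun j => 3%:R * Tk j)) => j k kj; by rewrite cnat Tk_small ?mulr0. Qed.

Lemma Psi_Q n : Psi n = Q n.+1 n.
Proof.
rewrite /Q bigA_distr csum /Psi; apply: eq_bigr => J _.
rewrite -big_mkcond /= -(big_morph _ sXnD sXn0) /sXn eq_sym //.
Qed.

Lemma bigSum_R n : bigSum n = R n.+1 n.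
Proof.
rewrite /R bigA_distr csum /bigSum; apply: eq_bigr => J _.
rewrite -big_mkcond /= big_split /= prodr_const -natrX cnat natrX //.
Qed.

Lemma sXn3 k : sXn (3 ^ k.+1) = sXn (3 ^ k) ^+ 3.
Proof.
have -> : (3 ^ k.+1 = 3 ^ k + 3 ^ k + 3 ^ k)%N by rewrite expnS; lia.
by rewrite !sXnD; ring.
Qed.

Lemma keyT k : (1 + sXn (3 ^ k)) ^+ 3 = (1 + sXn (3 ^ k.+1)) * (3%:R * Tk k + 1).
Proof.
have H : (1 + sXn (3 ^ k.+1)) * Tk k = sXn (3 ^ k) * (1 + sXn (3 ^ k)).
  have -> : Tk k = sXn (3 ^ k) * (1 + sXn (3 ^ k)) * sinv1pXn (3 ^ k.+1) by [].
  by rewrite mulrCA inv_cancel ?mulr1 ?expn_gt0.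
rewrite mulrDr mulr1 mulrCA H sXn3; ring.
Qed.

Lemma mainId N : (1 + sXn 1) * (Q N * Q N) = (1 + sXn (3 ^ N)) * R N.
Proof.
elim: N => [|N IH]; first by rewrite /Q /R !big_ord0 !mulr1.
rewrite /Q /R !big_ord_recr /= -/(Q N) -/(R N).
transitivity (((1 + sXn 1) * (Q N * Q N)) * (1 + sXn (3 ^ N)) ^+ 2); first by ring.
rewrite IH; transitivity (R N * (1 + sXn (3 ^ N)) ^+ 3); first by ring.
rewrite keyT; ring.
Qed.

Lemma R_3 N : exists S : series, R N = 1 + 3%:R * S.
Proof.
elim: N => [|N [S IH]]; first by exists 0; rewrite /R big_ord0; ring.
exists (S + Tk N + 3%:R * S * Tk N).
by rewrite /R big_ord_recr /= -/(R N) IH; ring.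
Qed.

Theorem lemma2p1 :
  (forall n : nat, smul Psi Psi n = smul (sinv1pXn 1) bigSum n) /\
  (forall n : nat, (3 %| (smul Psi Psi n - sinv1pXn 1 n))%Z).
Proof.
have E1 n : smul Psi Psi n = (Q n.+1 * Q n.+1) n.
  rewrite /smul cM; apply: eq_bigr => [[k kn]] _ /=.
  have Hk : (n.+1 = k.+1 + (n - k))%N by rewrite -ltnS in kn; lia.
  have Hk2 : (n.+1 = (n - k).+1 + k)%N by rewrite -ltnS in kn; lia.
  by rewrite !Psi_Q {1}Hk Q_stab Hk2 Q_stab.
have E2 n : smul (sinv1pXn 1) bigSum n = (sinv1pXn 1 * R n.+1) n.
  rewrite /smul cM; apply: eq_bigr => [[k kn]] _ /=.
  have Hk2 : (n.+1 = (n - k).+1 + k)%N by rewrite -ltnS in kn; lia.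
  by rewrite bigSum_R Hk2 R_stab.
have E3 n : (Q n.+1 * Q n.+1) n = (sinv1pXn 1 * R n.+1) n.
  have -> : Q n.+1 * Q n.+1 = sinv1pXn 1 * ((1 + sXn 1) * (Q n.+1 * Q n.+1)).
    by rewrite mulrA [sinv1pXn 1 * _]mulrC inv_cancel // mul1r.
  rewrite mainId mulrDl mul1r mulrDr cD [sinv1pXn 1 * (sXn _ * _)]mulrCA shiftE.
  have -> : (3 ^ n.+1 <= n)%N = false.
    by apply/negbTE; rewrite -ltnNge (ltn_trans (ltnSn n) (ltn_expl _ (isT : (1 < 3)%N))).
  by rewrite addr0.
split=> n; first by rewrite E1 E3 E2.
rewrite E1 E3; have [S ->] := R_3 n.+1.
rewrite mulrDr mulr1 cD addrC addKr mulrCA cnat.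
by apply/dvdzP; exists ((sinv1pXn 1 * S) n); rewrite mulrC.
Qed.
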